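(* In the MemSinks setting described in the context, suppose the model is trained from zero initialization for $N$ total steps, during which the repeated example $(\mathbf{s}^{\mathrm{mem}},\mathbf{e}^{\mathrm{mem}})$ is observed $k$ times and non-repeated examples are observed $N-k$ times, and suppose the memorization activations of $\mathbf{s}^{\mathrm{mem}}$ overlap (have nonzero inner product) with those of at most $p(N-k)$ of the non-repeated steps. Then at the end of training: (1) $(\mathbf{e}^{\mathrm{mem}})^\top f^{(N)}_{\mathrm{shared\text{-}only}}(\mathbf{s}^{\mathrm{mem}})\le \gamma k(1-c_{\min})-\gamma(N-k)\,\epsilon_{\mathrm{shared}}\,c_{\min}$; (2) $(\mathbf{e}^{\mathrm{mem}})^\top f^{(N)}_{\mathrm{mem\text{-}only}}(\mathbf{s}^{\mathrm{mem}})\ge \gamma k(1-c_{\max})-\gamma(N-k)\,p\,\epsilon_{\mathrm{mem}}\,c_{\max}$.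
   Context: Model: $f(\mathbf{z})=\mathbf{W}_{\mathrm{proj}}\mathbf{z}\in\mathbb{R}^V$ with fixed hidden activations $\mathbf{z}(\mathbf{s})=[\mathbf{z}(\mathbf{s})_{\mathrm{shared}};\mathbf{z}(\mathbf{s})_{\mathrm{mem}}]$ split into shared (generalization) neurons and memorization-sink neurons, and $\mathbf{W}_{\mathrm{proj}}=[\mathbf{W}^{\mathrm{shared}}_{\mathrm{proj}}\ \mathbf{W}^{\mathrm{mem}}_{\mathrm{proj}}]$ correspondingly. In MemSinks, each sequence activates a sequence-specific (deterministic, consistent across repetitions) subset of memorization neurons and the rest are masked to zero; $\mathbf{z}(\mathbf{s})_{\mathrm{mem}}$ denotes the masked memorization activation. $f_{\mathrm{shared\text{-}only}}(\mathbf{s})=\mathbf{W}^{\mathrm{shared}}_{\mathrm{proj}}\mathbf{z}(\mathbf{s})_{\mathrm{shared}}$ (memorization neurons dropped out) and $f_{\mathrm{mem\text{-}only}}(\mathbf{s})=\mathbf{W}^{\mathrm{mem}}_{\mathrm{proj}}\mathbf{z}(\mathbf{s})_{\mathrm{mem}}$ (shared neurons dropped out); $f^{(N)}$ denotes parameters after $N$ steps. Training: batch size 1, cross-entropy loss with softmax $\sigma$ applied to the full forward pass $f(\mathbf{z})$, learning rate $\gamma>0$; an update on $(\mathbf{z},\mathbf{e})$ is $\mathbf{W}^{\mathrm{shared}}_{\mathrm{proj}}\leftarrow\mathbf{W}^{\mathrm{shared}}_{\mathrm{proj}}+\gamma(\mathbf{e}-\sigma(f(\mathbf{z})))\mathbf{z}_{\mathrm{shared}}^\top$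 and $\mathbf{W}^{\mathrm{mem}}_{\mathrm{proj}}\leftarrow\mathbf{W}^{\mathrm{mem}}_{\mathrm{proj}}+\gamma(\mathbf{e}-\sigma(f(\mathbf{z})))\mathbf{z}_{\mathrm{mem}}^\top$. Targets are one-hot vectors in $\mathbb{R}^V$, and every non-repeated example has target different from $\mathbf{e}^{\mathrm{mem}}$. Assumptions: $\|\mathbf{z}(\mathbf{s}^{\mathrm{mem}})_{\mathrm{shared}}\|_2=\|\mathbf{z}(\mathbf{s}^{\mathrm{mem}})_{\mathrm{mem}}\|_2=1$; throughout training the logits of every forward pass used in an update satisfy $\|f(\mathbf{z})\|_\infty\le C_{\mathrm{proj}}/2$; for every non-repeated example $\mathbf{s}^{(j)}$, $\mathbf{z}(\mathbf{s}^{\mathrm{mem}})_{\mathrm{shared}}^\top\mathbf{z}(\mathbf{s}^{(j)})_{\mathrm{shared}}\ge\epsilon_{\mathrm{shared}}\ge0$ and $0\le\mathbf{z}(\mathbf{s}^{\mathrm{mem}})_{\mathrm{mem}}^\top\mathbf{z}(\mathbf{s}^{(j)})_{\mathrm{mem}}\le\epsilon_{\mathrm{mem}}$. Constants: $c_{\min}=\exp(-C_{\mathrm{proj}})/V$ and $c_{\max}=\exp(C_{\mathrm{proj}})/(V-1)$, with $V\ge2$. *)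

(* Defs.v *)
From HB Require Import structures.
From mathcomp Require Import all_boot all_order all_algebra.
From mathcomp Require Import reals.
From mathcomp Require Import sequences exp.
Import Order.TTheory GRing.Theory Num.Theory.
Local Open Scope ring_scope.

Definition onehot {R : realType} {V : nat} (i : 'I_V) : 'cV[R]_V := delta_mx i 0.

Definition dotv {R : realType} {n : nat} (u v : 'cV[R]_n) : R := (u^T *m v) 0 0.

Definition softmax {R : realType} {V : nat} (v : 'cV[R]_V) : 'cV[R]_V :=
  \col_i (expR (v i 0) / \sum_j expR (v j 0)).

Definition fwd {R : realType} {V ds dm : nat}
  (W : 'M[R]_(V, ds) * 'M[R]_(V, dm)) (zs : 'cV[R]_ds) (zm : 'cV[R]_dm) : 'cV[R]_V :=
  W.1 *m zs + W.2 *m zm.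

(* Parameters (W_shared, W_mem) after n SGD steps (batch size 1, cross-entropy
   with softmax on the full forward pass, learning rate gamma), from zero
   initialization; the example at step t (0-based) has shared activation zs t,
   (masked) memorization activation zm t and target onehot (tgt t). *)
Fixpoint params {R : realType} {V ds dm : nat} (gamma : R)
  (zs : nat -> 'cV[R]_ds) (zm : nat -> 'cV[R]_dm) (tgt : nat -> 'I_V) (n : nat)
  : 'M[R]_(V, ds) * 'M[R]_(V, dm) :=
  match n with
  | 0%N => (0, 0)
  | n'.+1 =>
      let W := params gamma zs zm tgt n' in
      let g := onehot (tgt n') - softmax (fwd W (zs n') (zm n')) in
      (W.1 + gamma *: (g *m (zs n')^T), W.2 + gamma *: (g *m (zm n')^T))
  end.

Definition c_min {R : realType} (V : nat) (C : R) : R := expR (- C) / V%:R.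
Definition c_max {R : realType} (V : nat) (C : R) : R := expR C / (V.-1)%:R.

(* Main.v *)
Require Import Defs.
From HB Require Import structures.
From mathcomp Require Import all_boot all_order all_algebra.
From mathcomp Require Import reals.
From mathcomp Require Import sequences exp.
From mathcomp Require Import ring lra.
Import Order.TTheory GRing.Theory Num.Theory.
Local Open Scope ring_scope.

Lemma onehotT_mul (R : realType) V (e : 'I_V) (v : 'cV[R]_V) :
  ((onehot e)^T *m v) 0 0 = v e 0.
Proof.
rewrite mxE (bigD1 e) //= big1 ?addr0.
  by rewrite !mxE !eqxx /= mul1r.
by move=> i ne; rewrite !mxE (negbTE ne) mul0r.
Qed.

Lemma onehot_entry (R : realType) V (i e : 'I_V) :
  (onehot i : 'cV[R]_V) e 0 = (i == e)%:R.
Proof. by rewrite mxE eqxx andbT eq_sym. Qed.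

Lemma dotvC (R : realType) n (u v : 'cV[R]_n) : dotv u v = dotv v u.
Proof.
by rewrite /dotv -[u^T *m v]trmxK trmx_mul trmxK mxE.
Qed.

Lemma step_upd (R : realType) V d (gamma : R) (e : 'I_V) (W : 'M[R]_(V, d))
  (g : 'cV[R]_V) (z u : 'cV[R]_d) :
  ((onehot e)^T *m ((W + gamma *: (g *m z^T)) *m u)) 0 0 =
  ((onehot e)^T *m (W *m u)) 0 0 + gamma * g e 0 * dotv z u.
Proof.
rewrite !onehotT_mul mulmxDl mxE; congr (_ + _).
rewrite -scalemxAl mxE -mulmxA mxE big_ord1 mulrA.
by rewrite /dotv.
Qed.

Lemma softmax_bounds (R : realType) V (C : R) (v : 'cV[R]_V) (e : 'I_V) :
  (1 < V)%N -> (forall i, `|v i 0| <= C / 2) ->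
  c_min V C <= softmax v e 0 <= c_max V C /\ softmax v e 0 <= 1.
Proof.
move=> V1 hb.
have hb' : forall i, - (C/2) <= v i 0 <= C/2 by move=> i; rewrite -ler_norml.
have epos : forall i, 0 < expR (v i 0) by move=> i; exact: expR_gt0.
set S := \sum_j expR (v j 0).
have Se : S = expR (v e 0) + \sum_(j | j != e) expR (v j 0) by rewrite /S (bigD1 e).
have Rpos : 0 <= \sum_(j | j != e) expR (v j 0) by apply: sumr_ge0 => j _; exact/ltW.
have Spos : 0 < S by rewrite Se; exact: ltr_wpDr.
have lo : forall i, expR (- (C/2)) <= expR (v i 0) by move=> i; rewrite ler_expR; case/andP: (hb' i).
have hi : forall i, expR (v i 0) <= expR (C/2) by move=> i; rewrite ler_expR; case/andP: (hb' i).
have hC : expR C = expR (C/2) / expR (- (C/2)) by rewrite expRN invrK -expRD -splitr.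
have hC' : expR (-C) = expR (- (C/2)) / expR (C/2) by rewrite !expRN -invfM -expRD -splitr.
have ep1 : 0 < expR (C/2) := expR_gt0 _.
have ep2 : 0 < expR (- (C/2)) := expR_gt0 _.
have SV : S <= V%:R * expR (C/2).
  rewrite /S; apply: le_trans (ler_sum _ (fun i _ => hi i)) _.
  by rewrite sumr_const card_ord mulr_natl.
have RV : (V.-1)%:R * expR (- (C/2)) <= \sum_(j | j != e) expR (v j 0).
  apply: le_trans _ (ler_sum _ (fun i _ => lo i)).
  by rewrite sumr_const mulr_natl cardC1 card_ord.
have V0 : (0 < V)%N by apply: ltnW.
have Vpos : (0 : R) < V%:R by rewrite ltr0n.
have V1pos : (0 : R) < (V.-1)%:R by rewrite ltr0n -ltnS prednK.
rewrite /softmax mxE -/S /c_min /c_max; split; first (apply/andP; split).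
- rewrite hC' ler_pdivlMr //.
  apply: le_trans (_ : _ <= expR (- (C / 2)) / expR (C / 2) / V%:R * (V%:R * expR (C / 2))) _.
    by apply: ler_wpM2l => //; rewrite !divr_ge0 // ltW.
  have -> : expR (- (C / 2)) / expR (C / 2) / V%:R * (V%:R * expR (C / 2)) = expR (- (C / 2)).
    by field; apply/andP; split; rewrite gt_eqF.
  exact: lo.
- rewrite hC ler_pdivrMr // mulrAC ler_pdivlMr //.
  apply: le_trans (_ : _ <= expR (C / 2) * V.-1%:R) _.
    by apply: ler_wpM2r; [exact: ltW | exact: hi].
  have -> : expR (C / 2) * V.-1%:R = expR (C / 2) / expR (- (C / 2)) * (V.-1%:R * expR (- (C / 2))).
    by field; rewrite gt_eqF.
  apply: ler_wpM2l; first by rewrite !divr_ge0 // ltW.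
  by apply: le_trans RV _; rewrite Se lerDr ltW.
- by rewrite ler_pdivrMr // mul1r Se lerDl.
Qed.

Lemma sub_entry (R : realType) V (i e : 'I_V) (s : 'cV[R]_V) :
  (onehot i - s) e 0 = (onehot i : 'cV[R]_V) e 0 - s e 0.
Proof. by rewrite !mxE. Qed.

Theorem theoremG3 (R : realType) (V ds dm : nat) (gamma C eps_sh eps_mem p : R)
  (N k : nat)
  (zs : nat -> 'cV[R]_ds) (zm : nat -> 'cV[R]_dm) (tgt : nat -> 'I_V)
  (rep : nat -> bool)
  (zs_mem : 'cV[R]_ds) (zm_mem : 'cV[R]_dm) (e_mem : 'I_V) :
  (1 < V)%N ->
  0 < gamma ->
  0 <= eps_sh ->
  dotv zs_mem zs_mem = 1 ->
  dotv zm_mem zm_mem = 1 ->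
  (* the repeated example is seen exactly k times among the N steps *)
  count rep (iota 0 N) = k ->
  (forall t, (t < N)%N -> rep t ->
     [/\ zs t = zs_mem, zm t = zm_mem & tgt t = e_mem]) ->
  (* non-repeated examples *)
  (forall t, (t < N)%N -> ~~ rep t ->
     [/\ tgt t != e_mem,
         eps_sh <= dotv zs_mem (zs t) &
         0 <= dotv zm_mem (zm t) <= eps_mem]) ->
  (* memorization activations of s_mem overlap with at most p(N-k) non-repeated steps *)
  (count (fun t => ~~ rep t && (dotv zm_mem (zm t) != 0)) (iota 0 N))%:R
     <= p * (N - k)%:R ->
  (* logits of every forward pass used in an update are bounded by C/2 in sup norm *)
  (forall t, (t < N)%N -> forall i : 'I_V,
     `|fwd (params gamma zs zm tgt t) (zs t) (zm t) i 0| <= C / 2) ->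
  let W := params gamma zs zm tgt N in
  ((onehot e_mem)^T *m (W.1 *m zs_mem)) 0 0
     <= gamma * k%:R * (1 - c_min V C) - gamma * (N - k)%:R * eps_sh * c_min V C /\
  gamma * k%:R * (1 - c_max V C) - gamma * (N - k)%:R * p * eps_mem * c_max V C
     <= ((onehot e_mem)^T *m (W.2 *m zm_mem)) 0 0.
Proof.
move=> V1 g0 esh0 dzs dzm hk hrep hnr hp hC W.
set cmin := c_min V C; set cmax := c_max V C.
set ov := (fun t => ~~ rep t && (dotv zm_mem (zm t) != 0)).
have cmin0 : 0 <= cmin by rewrite /cmin /c_min divr_ge0 // ltW // expR_gt0.
have cmax0 : 0 <= cmax by rewrite /cmax /c_max divr_ge0 // ltW // expR_gt0.
have main : forall n, (n <= N)%N ->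
  ((onehot e_mem)^T *m ((params gamma zs zm tgt n).1 *m zs_mem)) 0 0
     <= gamma * (count rep (iota 0 n))%:R * (1 - cmin)
        - gamma * (count (predC rep) (iota 0 n))%:R * eps_sh * cmin /\
  gamma * (count rep (iota 0 n))%:R * (1 - cmax)
        - gamma * (count ov (iota 0 n))%:R * eps_mem * cmax
     <= ((onehot e_mem)^T *m ((params gamma zs zm tgt n).2 *m zm_mem)) 0 0.
  elim=> [|n IH] hn.
    by rewrite /= !onehotT_mul !mul0mx !mxE !mulr0 !mul0r !subr0; split.
  have hnN : (n < N)%N by [].
  have [IH1 IH2] := IH (ltnW hnN).
  have -> : iota 0 n.+1 = iota 0 n ++ [:: n] by rewrite -addn1 iotaD.
  rewrite !count_cat /= !addn0 !natrD.
  rewrite /= !step_upd !sub_entry onehot_entry.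
  set sig := softmax _ e_mem 0.
  have [/andP [s1 s2] s3] : cmin <= sig <= cmax /\ sig <= 1.
    by apply: softmax_bounds => // i; exact: hC.
  case: (boolP (rep n)) => hr.
    have [-> -> ->] := hrep n hnN hr.
    rewrite eqxx dzs dzm /= !mulr1 /ov hr /= !addr0.
    split; nra.
  have [hne hd1 /andP [hd2 hd3]] := hnr n hnN hr.
  rewrite (negbTE hne) /= !sub0r !addr0.
  rewrite (dotvC _ _ (zs n)) (dotvC _ _ (zm n)).
  have hsig0 : 0 <= sig by apply: le_trans s1.
  split.
    have h1 : cmin * eps_sh <= sig * dotv zs_mem (zs n) by apply: ler_pM.
    have h2 : gamma * (cmin * eps_sh) <= gamma * (sig * dotv zs_mem (zs n)).
      by apply: ler_wpM2l => //; exact: ltW.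
    rewrite mulrN mulNr.
    set A := ((onehot e_mem)^T *m _) 0 0 in IH1 *.
    set c1 := (count rep (iota 0 n))%:R in IH1 *.
    set c2 := (count (predC rep) (iota 0 n))%:R in IH1 *.
    have -> : gamma * (c2 + 1) * eps_sh * cmin = gamma * c2 * eps_sh * cmin + gamma * (cmin * eps_sh) by ring.
    rewrite mulrA in h2; lra.
  rewrite /ov /= hr /=.
  rewrite mulrN mulNr.
  set B := ((onehot e_mem)^T *m _) 0 0 in IH2 *.
  set c1 := (count rep (iota 0 n))%:R in IH2 *.
  set c3 := (count ov (iota 0 n))%:R in IH2 *.
  case: eqP => hd /=.
    by rewrite hd !mulr0 subr0 addr0.
  have h1 : sig * dotv zm_mem (zm n) <= cmax * eps_mem by apply: ler_pM.
  have h2 : gamma * (sig * dotv zm_mem (zm n)) <= gamma * (cmax * eps_mem).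
    by apply: ler_wpM2l => //; exact: ltW.
  have -> : gamma * (c3 + 1) * eps_mem * cmax = gamma * c3 * eps_mem * cmax + gamma * (cmax * eps_mem) by ring.
  rewrite mulrA in h2; lra.
have [M1 M2] := main N (leqnn N).
have hc : count (predC rep) (iota 0 N) = (N - k)%N.
  by have := count_predC rep (iota 0 N); rewrite size_iota hk => {2}<-; rewrite addKn.
rewrite hk hc in M1; split => //.
rewrite hk in M2; apply: le_trans M2.
have : (count ov (iota 0 N))%:R * eps_mem * cmax <= p * (N - k)%:R * eps_mem * cmax.
  case: (lerP 0 eps_mem) => he.
    by apply: ler_wpM2r => //; apply: ler_wpM2r.
  have h0 : count (predC rep) (iota 0 N) = 0%N.
    apply/eqP; rewrite -leqn0 leqNgt -has_count; apply/negP => /hasP [t].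
    rewrite mem_iota add0n => /andP [_ tN] /= hr.
    have [_ _ /andP [a b]] := hnr t tN hr.
    by move: (le_trans a b); rewrite leNgt he.
  rewrite hc in h0; rewrite h0 !mulr0 !mul0r.
  have : (count ov (iota 0 N) <= count (predC rep) (iota 0 N))%N.
    by apply: sub_count => t /andP [].
  by rewrite hc h0 leqn0 => /eqP ->; rewrite !mul0r.
nra.
Qed.
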